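(* Let $\varepsilon\in(0,\frac12)$, $z\ge 1$, let $X\subset[\Delta]^d$ be a weighted dataset (with $n$ points), and let $C'$ be a set of $k$ centers that is a constant-factor approximation to $(k,z)$-clustering on $X$. Let $\varepsilon'=\frac{\mathrm{poly}(\varepsilon^z)}{\mathrm{poly}(k,\log(nd\Delta))}$ (for suitable polynomials). Form $X'$ as follows: for each $x\in X$, let $c'(x)$ be the closest center of $C'$ to $x$, let $y$ be the offset $x-c'(x)$ with each coordinate rounded to a power of $(1+\varepsilon')$, let $x'=c'(x)+y$, and give $x'$ the weight of $x$ rounded to a power of $(1+\varepsilon')$. Then for all $C\subset[\Delta]^d$ with $|C|\le k$, \[(1-\varepsilon)\,\mathrm{Cost}(C,X)\le\mathrm{Cost}(C,X')\le(1+\varepsilon)\,\mathrm{Cost}(C,X).\]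
   Context: $\mathrm{Cost}(C,X)=\sum_{x\in X}w(x)\min_{c\in C}\|x-c\|_2^z$ for a weighted set $X$ with weights $w$. $C'$ is a constant-factor approximation if $\mathrm{Cost}(C',X)\le\gamma\min_{|C|\le k}\mathrm{Cost}(C,X)$ for some constant $\gamma\ge1$. Rounding a coordinate to a power of $(1+\varepsilon')$ preserves its sign and changes its absolute value by at most a factor $(1+\varepsilon')$ (zero stays zero). *)

(* Defs.v *)
From HB Require Import structures.
From mathcomp Require Import all_boot all_order all_algebra.
From mathcomp Require Import all_classical all_reals all_analysis.
Set Implicit Arguments. Unset Strict Implicit. Unset Printing Implicit Defensive.
Import Order.TTheory GRing.Theory Num.Theory.
Local Open Scope ring_scope.

(* Points of R^d are row vectors 'rV[R]_d; coordinate j of x is x 0 j. *)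

Definition edist (R : realType) (d : nat) (x c : 'rV[R]_d) : R :=
  Num.sqrt (\sum_(j < d) (x 0 j - c 0 j) ^+ 2).

(* min_{c in C} ||x - c||_2^z  (meaningful for nonempty C) *)
Definition mincost (R : realType) (d : nat) (z : R) (C : seq 'rV[R]_d)
    (x : 'rV[R]_d) : R :=
  \big[Num.min / powR (edist x (head 0 C)) z]_(c <- C) powR (edist x c) z.

Definition Cost (R : realType) (d : nat) (z : R) (C : seq 'rV[R]_d)
    (n : nat) (p : 'I_n -> 'rV[R]_d) (w : 'I_n -> R) : R :=
  \sum_(i < n) w i * mincost z C (p i).

Definition in_grid (R : realType) (d Delta : nat) (x : 'rV[R]_d) : Prop :=
  forall j : 'I_d, exists m : nat, (1 <= m <= Delta)%N /\ x 0 j = m%:R.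

Definition round_pow (R : realType) (e a b : R) : Prop :=
  (a = 0 /\ b = 0) \/
  (a != 0 /\ Num.sg b = Num.sg a /\ (exists m : int, `|b| = (1 + e) ^ m) /\
   `|a| <= (1 + e) * `|b| /\ `|b| <= (1 + e) * `|a|).

Definition closest (R : realType) (d : nat) (C' : seq 'rV[R]_d)
    (x c : 'rV[R]_d) : Prop :=
  c \in C' /\ forall c2, c2 \in C' -> edist x c <= edist x c2.

(* Main.v *)
Require Import Defs.
From HB Require Import structures.
From mathcomp Require Import all_boot all_order all_algebra.
From mathcomp Require Import all_classical all_reals all_analysis.
Import Order.TTheory GRing.Theory Num.Theory.
Local Open Scope ring_scope.
From mathcomp Require Import ring lra.


Section H0.
Variable R : realType.

Lemma bigmin_le (T : eqType) (F : T -> R) (x0 : R) (s : seq T) c :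
  c \in s -> \big[Num.min/x0]_(i <- s) F i <= F c.
Proof.
elim: s => [//|a s IH]; rewrite in_cons big_cons => /orP[/eqP->|cs].
  by rewrite ge_min lexx.
by rewrite ge_min IH // orbT.
Qed.

Lemma bigmin_mem (T : eqType) (F : T -> R) (x0 : R) (s : seq T) :
  \big[Num.min/x0]_(i <- s) F i = x0 \/
  exists2 c, c \in s & \big[Num.min/x0]_(i <- s) F i = F c.
Proof.
elim: s => [|a s IH]; first by left; rewrite big_nil.
rewrite big_cons; case: (leP (F a) (\big[Num.min/x0]_(i <- s) F i)) => h.
  by right; exists a; rewrite ?mem_head.
case: IH => [->|[c cs ->]]; first by left.
by right; exists c => //; rewrite in_cons cs orbT.
Qed.

Lemma mincost_mem d z (C : seq 'rV[R]_d) x : C != [::] ->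
  exists2 c, c \in C & mincost z C x = powR (Defs.edist x c) z.
Proof.
move=> hC; rewrite /mincost.
case: (@bigmin_mem _ (fun c => powR (Defs.edist x c) z) (powR (Defs.edist x (head 0 C)) z) C) => [->|//].
by exists (head 0 C) => //; case: C hC => //= a s _; rewrite mem_head.
Qed.

Lemma mincost_le d z (C : seq 'rV[R]_d) x c : c \in C ->
  mincost z C x <= powR (Defs.edist x c) z.
Proof. exact: (@bigmin_le _). Qed.

Lemma mincost_ge0 d z (C : seq 'rV[R]_d) x : C != [::] -> 0 <= mincost z C x.
Proof. by move=> hC; case: (@mincost_mem d z C x hC) => c _ ->; exact: powR_ge0. Qed.

Lemma mincost_closest d z (C : seq 'rV[R]_d) x cc : 0 <= z -> closest C x cc ->
  powR (Defs.edist x cc) z <= mincost z C x.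
Proof.
move=> z0 [ccC hcl]; have hC : C != [::] by case: C ccC hcl.
case: (@mincost_mem d z C x hC) => c cC ->.
apply: ge0_ler_powR => //; rewrite ?nnegrE /Defs.edist ?sqrtr_ge0 //.
exact: hcl.
Qed.

Lemma round_diff (e a b : R) : 0 <= e -> round_pow e a b -> `|b - a| <= e * `|a|.
Proof.
move=> e0 [[-> ->]|[a0 [hsg [_ [h1 h2]]]]]; first by rewrite subrr normr0 mulr0.
have -> : b - a = Num.sg a * (`|b| - `|a|).
  by rewrite mulrBr -hsg -!numEsg hsg -numEsg.
rewrite normrM normr_sg a0 mul1r.
case: (leP `|a| `|b|) => h.
  rewrite ger0_norm ?subr_ge0 //; lra.
rewrite ltr0_norm ?subr_lt0 //.
have : `|a| - `|b| <= e * `|b| by lra.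
move=> h3; have h4 : e * `|b| <= e * `|a| by rewrite ler_wpM2l // ltW.
lra.
Qed.

End H0.



Section H1.
Variable R : realType.

Lemma pt_bound (t s e u v g : R) : 0 < t -> t * s = 1 -> 0 <= e ->
  `|v - u| <= e * `|g| -> v ^+ 2 <= (1 + t) * u ^+ 2 + (1 + s) * e ^+ 2 * g ^+ 2.
Proof.
move=> t0 ts e0 h.
have s0 : 0 < s by nra.
set dl := v - u.
have hd : dl ^+ 2 <= e ^+ 2 * g ^+ 2.
  rewrite -(real_normK (num_real dl)) -(real_normK (num_real g)).
  have : 0 <= `|dl| by [].
  have : 0 <= `|g| by [].
  nra.
have -> : v = u + dl by rewrite /dl addrC subrK.
have h2 : 0 <= s * (t * u - dl) ^+ 2 by apply: mulr_ge0; [exact: ltW | exact: sqr_ge0].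
have e1 : s * (t * u - dl) ^+ 2 = (t * s) * t * u ^+ 2 - 2 * (t * s) * u * dl + s * dl ^+ 2 by ring.
rewrite ts in e1.
have h3 : s * dl ^+ 2 <= s * (e ^+ 2 * g ^+ 2) by rewrite ler_wpM2l // ltW.
have e2 : (u + dl) ^+ 2 = u ^+ 2 + 2 * u * dl + dl ^+ 2 by ring.
rewrite e2.
have e3 : (1 + t) * u ^+ 2 + (1 + s) * e ^+ 2 * g ^+ 2 = u ^+ 2 + t * u ^+ 2 + e ^+ 2 * g ^+ 2 + s * (e ^+ 2 * g ^+ 2) by ring.
rewrite e3. lra.
Qed.

Lemma geo (t e : R) d (u v g : 'I_d -> R) : 0 < t -> 0 <= e ->
  (forall j, `|v j - u j| <= e * `|g j|) ->
  Num.sqrt (\sum_j (v j)^+2) <= (1 + t) * Num.sqrt (\sum_j (u j)^+2) \/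
  Num.sqrt (\sum_j (v j)^+2) <= ((1 + t^-1) * e) * Num.sqrt (\sum_j (g j)^+2).
Proof.
move=> t0 e0 h.
have ts : t * t^-1 = 1 by rewrite mulfV // gt_eqF.
have s0 : 0 < t^-1 by rewrite invr_gt0.
set S' := \sum_j (v j)^+2; set S := \sum_j (u j)^+2; set G := \sum_j (g j)^+2.
have hS : 0 <= S by apply: sumr_ge0 => j _; exact: sqr_ge0.
have hG : 0 <= G by apply: sumr_ge0 => j _; exact: sqr_ge0.
have hS' : S' <= (1 + t) * S + (1 + t^-1) * e ^+ 2 * G.
  rewrite /S' /S /G !mulr_sumr -big_split /=.
  apply: ler_sum => j _; exact: pt_bound.
have [hc|hc] := leP ((1 + t^-1) * e ^+ 2 * G) (t * (1 + t) * S).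
  left.
  have -> : (1 + t) * Num.sqrt S = Num.sqrt ((1 + t) ^+ 2 * S).
    by rewrite sqrtrM ?sqr_ge0 // sqrtr_sqr ger0_norm //; lra.
  apply: ler_wsqrtr; lra.
right.
have -> : (1 + t^-1) * e * Num.sqrt G = Num.sqrt (((1 + t^-1) * e) ^+ 2 * G).
  rewrite sqrtrM ?sqr_ge0 // sqrtr_sqr ger0_norm //.
  by apply: mulr_ge0 => //; lra.
apply: ler_wsqrtr.
have h1 : (1 + t) * S <= t^-1 * ((1 + t^-1) * e ^+ 2 * G).
  have : t^-1 * (t * (1 + t) * S) = (1 + t) * S.
    by rewrite !mulrA mulVf ?mul1r // gt_eqF.
  move=> <-; rewrite ler_wpM2l //; [exact: ltW | exact: ltW].
have -> : ((1 + t^-1) * e) ^+ 2 * G = (1 + t^-1) * ((1 + t^-1) * e ^+ 2 * G).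
  by rewrite exprMn !mulrA.
lra.
Qed.

End H1.



Section H2.
Variable R : realType.

Lemma expR_small (x : R) : 0 <= x <= 1/2 -> expR x <= 1 + 2 * x.
Proof.
move=> hx.
have h1 : 1 - x <= expR (- x) by have := @expR_ge1Dx R (- x); lra.
have h2 : expR x * expR (- x) = 1 by rewrite -expRD subrr expR0.
have h3 : 0 < expR x := expR_gt0 x.
nra.
Qed.

Lemma ln_eps (e : R) : 0 < e < 1/2 -> ln e <= - (1/2).
Proof.
move=> he; have [he1 he2] := andP he.
have h : e <= expR (- (1/2)) by have := @expR_ge1Dx R (- (1/2)); lra.
rewrite -(expRK (- (1/2))); rewrite ler_ln // posrE ?expR_gt0 //; lra.
Qed.

Lemma powR_eps (e z : R) : 0 < e < 1/2 -> 1 <= z -> powR e (4 * z) * z <= e ^+ 2.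
Proof.
move=> he hz; have [he1 he2] := andP he.
have e0 : 0 < e by lra.
have hl := @ln_eps e he.
rewrite /powR gt_eqF //.
have h1 : 4 * z * ln e <= (ln e + ln e) + - z by nra.
have h2 : expR (4 * z * ln e) <= e ^+ 2 * expR (- z).
  have -> : e ^+ 2 * expR (- z) = expR (ln e + ln e + - z).
    by rewrite !expRD lnK ?posrE // expr2.
  by rewrite ler_expR.
have h3 : z * expR (- z) <= 1.
  have := expR_ge1Dx z; have h5 : expR z * expR (- z) = 1 by rewrite -expRD subrr expR0.
  have : 0 < expR (- z) := expR_gt0 _.
  nra.
have h6 : 0 <= e ^+ 2 by exact: sqr_ge0.
nra.
Qed.

Lemma powR_1t (t z : R) : 0 <= t -> 0 <= z -> powR (1 + t) z <= expR (z * t).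
Proof.
move=> t0 z0; rewrite /powR gt_eqF; last by lra.
rewrite ler_expR ler_wpM2l // le_ln1Dx //; lra.
Qed.

End H2.



Section H3.
Variable R : realType.

Lemma sum_upper n (w w' m m' r : 'I_n -> R) (A B e : R) : 0 <= e ->
  (forall i, 0 <= w i) -> (forall i, 0 <= m' i) -> (forall i, w' i <= (1 + e) * w i) ->
  (forall i, m' i <= A * m i + B * r i) ->
  \sum_i w' i * m' i <= (1 + e) * (A * \sum_i w i * m i + B * \sum_i w i * r i).
Proof.
move=> e0 hw hm' hw' hm.
have -> : (1 + e) * (A * \sum_i w i * m i + B * \sum_i w i * r i) =
   \sum_i ((1 + e) * (A * (w i * m i)) + (1 + e) * (B * (w i * r i))).
  by rewrite big_split /= -!mulr_sumr; ring.
apply: ler_sum => i _.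
have h1 : w' i * m' i <= (1 + e) * w i * m' i by rewrite ler_wpM2r.
have h2 : (1 + e) * w i * m' i <= (1 + e) * w i * (A * m i + B * r i).
  by rewrite ler_wpM2l // mulr_ge0 //; lra.
have -> : (1 + e) * (A * (w i * m i)) + (1 + e) * (B * (w i * r i)) =
   (1 + e) * w i * (A * m i + B * r i) by ring.
exact: le_trans h1 h2.
Qed.

Lemma sum_lower n (w w' m m' r : 'I_n -> R) (A B e : R) : 0 <= A ->
  (forall i, 0 <= w i) -> (forall i, 0 <= m' i) -> (forall i, w i <= (1 + e) * w' i) ->
  (forall i, m i <= A * m' i + B * r i) ->
  \sum_i w i * m i - B * \sum_i w i * r i <= A * (1 + e) * \sum_i w' i * m' i.
Proof.
move=> A0 hw hm' hw' hm.
have -> : \sum_i w i * m i - B * \sum_i w i * r i = \sum_i (w i * m i - B * (w i * r i)).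
  by rewrite sumrB mulr_sumr.
rewrite mulr_sumr; apply: ler_sum => i _.
have h0 : 0 <= A * m' i by apply: mulr_ge0.
have h1 : w i * (m i - B * r i) <= w i * (A * m' i) by rewrite ler_wpM2l //; have := hm i; lra.
have h2 : w i * (A * m' i) <= (1 + e) * w' i * (A * m' i) by rewrite ler_wpM2r.
have -> : w i * m i - B * (w i * r i) = w i * (m i - B * r i) by ring.
have -> : A * (1 + e) * (w' i * m' i) = (1 + e) * w' i * (A * m' i) by ring.
exact: le_trans h1 h2.
Qed.

Lemma final (K K' W A B e eps g : R) : 0 <= K -> 0 <= W -> W <= g * K -> 0 <= B ->
  0 <= A -> A <= 1 + eps / 8 -> B * g <= eps / 8 -> 0 <= e -> e <= eps / 1024 ->
  0 < eps -> eps < 1 / 2 -> 0 <= K' -> K' <= (1 + e) * (A * K + B * W) ->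
  K - B * W <= A * (1 + e) * K' ->
  (1 - eps) * K <= K' /\ K' <= (1 + eps) * K.
Proof.
move=> K0 W0 WK B0 A0 A1 Bg e0 e1 eps0 eps1 K'0 hU hL.
have hBW : B * W <= eps / 8 * K.
  apply: (le_trans (y := B * (g * K))); first by rewrite ler_wpM2l.
  by rewrite mulrA ler_wpM2r.
have hAK : A * K <= (1 + eps / 8) * K by rewrite ler_wpM2r.
have hAe : A * (1 + e) <= (1 + eps / 8) * (1 + eps / 1024).
  by apply: ler_pM => //; lra.
split.
  have h3 : A * (1 + e) * K' <= (1 + eps / 8) * (1 + eps / 1024) * K'.
    by rewrite ler_wpM2r.
  have h4 : (1 - eps) * ((1 + eps / 8) * (1 + eps / 1024)) <= 1 - eps / 8 by nra.
  have h5 : (1 - eps) * K * ((1 + eps / 8) * (1 + eps / 1024)) <= (1 - eps / 8) * K.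
    rewrite mulrAC ler_wpM2r //.
  have hM : 0 < (1 + eps / 8) * (1 + eps / 1024) by apply: mulr_gt0; lra.
  have : (1 - eps) * K * ((1 + eps / 8) * (1 + eps / 1024)) <= K' * ((1 + eps / 8) * (1 + eps / 1024)).
    rewrite [K' * _]mulrC; lra.
  by rewrite ler_pM2r.
have h6 : A * K + B * W <= (1 + eps / 4) * K by lra.
have h7 : (1 + e) * (A * K + B * W) <= (1 + e) * ((1 + eps / 4) * K) by rewrite ler_wpM2l //; lra.
have h8 : (1 + e) * ((1 + eps / 4) * K) <= (1 + eps / 1024) * ((1 + eps / 4) * K).
  by apply: ler_wpM2r; [apply: mulr_ge0 => //; lra | lra].
have h9 : (1 + eps / 1024) * ((1 + eps / 4) * K) <= (1 + eps) * K.
  rewrite mulrA ler_wpM2r //; nra.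
lra.
Qed.

Lemma key1 (a b c : R) : 0 < c -> 1/(512*c) * a * b * c = a * b / 512.
Proof. by move=> hc; field; rewrite gt_eqF. Qed.

Lemma key2 (e z : R) : 0 < z -> z * (e / (16 * z)) = e / 16.
Proof. by move=> hz; field; rewrite gt_eqF. Qed.

Lemma key3 (e z x g : R) : 0 < e -> 0 < z ->
  (1 + (e / (16 * z))^-1) * x * g = x * g + 16 * (x * z * g) / e.
Proof. by move=> he hz; rewrite invf_div; field; rewrite ?gt_eqF. Qed.

End H3.


Lemma cpos (R : realType) (gamma : R) : 1 <= gamma -> 0 < 1 / (512 * gamma).
Proof. move=> hg; have h : 0 < 512 * gamma by lra. Time by apply: divr_gt0; [exact: ltr01 | exact: h]. Qed.



Section H5.
Variable R : realType.

Lemma numeric (gamma eps z P : R) : 1 <= gamma -> 0 < eps -> eps < 1/2 -> 1 <= z ->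
  0 < P -> P * z <= eps ^+ 2 ->
  [/\ 0 < 1 / (512 * gamma) * P, 1 / (512 * gamma) * P <= eps / 1024,
      0 < eps / (16 * z), powR (1 + eps / (16 * z)) z <= 1 + eps / 8 &
      powR ((1 + (eps / (16 * z))^-1) * (1 / (512 * gamma) * P)) z * gamma <= eps / 8].
Proof.
move=> hg he0 he1 hz hP0 hP.
have g0 : 0 < gamma by lra.
have z0 : 0 < z by lra.
have c0 : 0 < 1 / (512 * gamma) by apply: cpos.
set e' := 1 / (512 * gamma) * P.
have epos : 0 < e' by rewrite mulr_gt0.
have qE : e' * z * gamma = P * z / 512 by rewrite /e' key1.
have hq : e' * z * gamma <= eps ^+ 2 / 512 by rewrite qE; lra.
have hq0 : e' * gamma <= e' * z * gamma.
  have : e' <= e' * z by rewrite ler_peMr //; lra.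
  move=> h; rewrite ler_wpM2r //; lra.
have hsq : eps ^+ 2 <= eps / 2 by rewrite expr2; nra.
have he' : e' <= eps / 1024.
  have : e' <= e' * gamma by rewrite ler_peMr //; lra.
  lra.
have t0 : 0 < eps / (16 * z) by rewrite divr_gt0 // mulr_gt0 //; lra.
split => //.
  apply: (le_trans (@powR_1t R _ z (ltW t0) (ltW z0))).
  rewrite key2 //.
  have := @expR_small R (eps / 16); lra.
set u := (1 + (eps / (16 * z))^-1) * e'.
have uE : u * gamma = e' * gamma + 16 * (e' * z * gamma) / eps by rewrite /u key3.
have hq2 : (e' * z * gamma) / eps <= eps / 512.
  rewrite ler_pdivrMr //.
  have : eps / 512 * eps = eps ^+ 2 / 512 by rewrite expr2; ring.
  lra.
have hug : u * gamma <= eps / 8 by rewrite uE; lra.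
have upos : 0 < u.
  rewrite /u mulr_gt0 //; have := invr_gt0 (eps / (16 * z)); rewrite t0 => /esym h.
  have : 0 < (eps / (16 * z))^-1 by rewrite invr_gt0.
  lra.
have u1 : u <= 1.
  have : u <= u * gamma by rewrite ler_peMr //; lra.
  lra.
have hBu : powR u z <= u by apply: ge1r_powR => //; rewrite upos u1.
have : powR u z * gamma <= u * gamma by rewrite ler_wpM2r //; lra.
lra.
Qed.

End H5.



Section H6.
Variable R : realType.

Lemma weight_round (e a b : R) : 0 <= e -> 0 <= a -> round_pow e a b ->
  [/\ 0 <= b, b <= (1 + e) * a & a <= (1 + e) * b].
Proof.
move=> e0 a0 [[-> ->]|[an0 [hsg [_ [h1 h2]]]]]; first by split; rewrite ?mulr0.
have apos : 0 < a by rewrite lt_def an0 a0.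
have bpos : 0 < b by rewrite -sgr_cp0 hsg gtr0_sg.
rewrite (ger0_norm (ltW apos)) (ger0_norm (ltW bpos)) in h1 h2.
by split => //; exact: ltW.
Qed.

Lemma center_bound d (z t e : R) (y x pp c cc : 'rV[R]_d) : 0 <= z -> 0 < t -> 0 <= e ->
  (forall j, `|y 0 j - x 0 j| <= e * `|pp 0 j - cc 0 j|) ->
  powR (Defs.edist y c) z <= powR (1 + t) z * powR (Defs.edist x c) z
     + powR ((1 + t^-1) * e) z * powR (Defs.edist pp cc) z.
Proof.
move=> z0 t0 e0 h.
have hg : forall j, `|(fun j => y 0 j - c 0 j) j - (fun j => x 0 j - c 0 j) j|
     <= e * `|(fun j => pp 0 j - cc 0 j) j|.
  move=> j /=; have -> : y 0 j - c 0 j - (x 0 j - c 0 j) = y 0 j - x 0 j by ring.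
  exact: h.
have s0 : 0 < t^-1 by rewrite invr_gt0.
have hA : 0 <= 1 + t by lra.
have hB : 0 <= (1 + t^-1) * e by apply: mulr_ge0 => //; lra.
have hP1 : 0 <= powR (1 + t) z * powR (Defs.edist x c) z by apply: mulr_ge0; exact: powR_ge0.
have hP2 : 0 <= powR ((1 + t^-1) * e) z * powR (Defs.edist pp cc) z
  by apply: mulr_ge0; exact: powR_ge0.
case: (@geo R t e d _ _ _ t0 e0 hg) => /= hc.
  apply: (le_trans (y := powR ((1 + t) * Defs.edist x c) z)).
    apply: ge0_ler_powR => //; rewrite ?nnegrE /Defs.edist ?sqrtr_ge0 //.
    by apply: mulr_ge0 => //; exact: sqrtr_ge0.
  rewrite powRM //; last by rewrite /Defs.edist sqrtr_ge0.
  lra.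
apply: (le_trans (y := powR ((1 + t^-1) * e * Defs.edist pp cc) z)).
  apply: ge0_ler_powR => //; rewrite ?nnegrE /Defs.edist ?sqrtr_ge0 //.
  by apply: mulr_ge0 => //; exact: sqrtr_ge0.
rewrite powRM //; last by rewrite /Defs.edist sqrtr_ge0.
lra.
Qed.

End H6.


Theorem lemma2p6 (R : realType) (gamma : R) (hgamma : 1 <= gamma) :
  exists (c : R) (a b : nat), 0 < c /\
  forall (eps z : R) (d Delta k n : nat)
         (p : 'I_n -> 'rV[R]_d) (w : 'I_n -> R)
         (C' : seq 'rV[R]_d) (cc : 'I_n -> 'rV[R]_d)
         (p' : 'I_n -> 'rV[R]_d) (w' : 'I_n -> R),
    0 < eps -> eps < 1 / 2 -> 1 <= z ->
    (forall i, in_grid Delta (p i)) ->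
    (forall i, 0 <= w i) ->
    C' != [::] -> (size C' <= k)%N ->
    (forall C : seq 'rV[R]_d, (forall x, x \in C -> in_grid Delta x) ->
       C != [::] -> (size C <= k)%N ->
       Cost z C' p w <= gamma * Cost z C p w) ->
    let eps' := c * powR eps (a%:R * z) /
                  ((k%:R * (1 + ln (n * d * Delta)%:R)) ^+ b) in
    (forall i, closest C' (p i) (cc i)) ->
    (forall i (j : 'I_d), round_pow eps' (p i 0 j - cc i 0 j) (p' i 0 j - cc i 0 j)) ->
    (forall i, round_pow eps' (w i) (w' i)) ->
    forall C : seq 'rV[R]_d, (forall x, x \in C -> in_grid Delta x) ->
      C != [::] -> (size C <= k)%N ->
      (1 - eps) * Cost z C p w <= Cost z C p' w' /\
      Cost z C p' w' <= (1 + eps) * Cost z C p w.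
Proof.
have g0 : 0 < gamma by lra.
have c0 : 0 < 1 / (512 * gamma) by apply: cpos.
exists (1 / (512 * gamma)), 4%N, 0%N; split; first exact: c0.
move=> eps z d Delta k n p w C' cc p' w' he0 he1 hz hgrid hw hC' hk hopt eps'
  hcl hround hwround C hCgrid hC hCk.
have eps'E : eps' = 1 / (512 * gamma) * powR eps (4 * z) by rewrite /eps' expr0 divr1.
have he : 0 < eps < 1/2 by rewrite he0 he1.
have hP := @powR_eps R eps z he hz.
have Ppos : 0 < powR eps (4 * z) by apply: powR_gt0.
have [epos he' t0 hA hBg] := @numeric R gamma eps z _ hgamma he0 he1 hz Ppos hP.
rewrite -eps'E in epos he' hBg.
have z0 : 0 <= z by apply: le_trans hz; exact: ler01.
move: t0 hA hBg; set t := eps / (16 * z) => t0 hA hBg.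
move: hA hBg; set A := powR (1 + t) z; set B := powR _ z => hA hBg.
have A0 : 0 <= A by exact: powR_ge0.
have B0 : 0 <= B by exact: powR_ge0.
pose r i := powR (Defs.edist (p i) (cc i)) z.
have hd : forall i j, `|p' i 0 j - p i 0 j| <= eps' * `|p i 0 j - cc i 0 j|.
  move=> i j; have := @round_diff R eps' _ _ (ltW epos) (hround i j).
  by have -> : p' i 0 j - cc i 0 j - (p i 0 j - cc i 0 j) = p' i 0 j - p i 0 j by ring.
have hd' : forall i j, `|p i 0 j - p' i 0 j| <= eps' * `|p i 0 j - cc i 0 j|.
  by move=> i j; rewrite distrC.
have hup : forall i, mincost z C (p' i) <= A * mincost z C (p i) + B * r i.
  move=> i; case: (@mincost_mem R d z C (p i) hC) => c1 c1C ->.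
  apply: (le_trans (@mincost_le R d z C (p' i) c1 c1C)).
  exact: (@center_bound R d z t eps' _ _ _ _ _ z0 t0 (ltW epos) (hd i)).
have hlo : forall i, mincost z C (p i) <= A * mincost z C (p' i) + B * r i.
  move=> i; case: (@mincost_mem R d z C (p' i) hC) => c1 c1C ->.
  apply: (le_trans (@mincost_le R d z C (p i) c1 c1C)).
  exact: (@center_bound R d z t eps' _ _ _ _ _ z0 t0 (ltW epos) (hd' i)).
have hW : forall i, [/\ 0 <= w' i, w' i <= (1 + eps') * w i & w i <= (1 + eps') * w' i].
  move=> i; exact: (@weight_round R eps' _ _ (ltW epos) (hw i) (hwround i)).
have hm0 : forall i, 0 <= mincost z C (p' i) by move=> i; exact: mincost_ge0.
have hU := @sum_upper R n w w' (fun i => mincost z C (p i)) (fun i => mincost z C (p' i)) r A B eps'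
  (ltW epos) hw hm0 (fun i => let: And3 _ h _ := hW i in h) hup.
have hL := @sum_lower R n w w' (fun i => mincost z C (p i)) (fun i => mincost z C (p' i)) r A B eps'
  A0 hw hm0 (fun i => let: And3 _ _ h := hW i in h) hlo.
have hWK : \sum_i w i * r i <= gamma * Cost z C p w.
  apply: le_trans (hopt C hCgrid hC hCk).
  rewrite /Cost; apply: ler_sum => i _; rewrite ler_wpM2l //.
  exact: (@mincost_closest R d z C' (p i) (cc i) z0 (hcl i)).
have hW0 : 0 <= \sum_i w i * r i by apply: sumr_ge0 => i _; rewrite mulr_ge0 // powR_ge0.
have hK0 : 0 <= Cost z C p w by apply: sumr_ge0 => i _; rewrite mulr_ge0 // mincost_ge0.
have hK'0 : 0 <= Cost z C p' w'.
  by apply: sumr_ge0 => i _; have [h _ _] := hW i; rewrite mulr_ge0 // mincost_ge0.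
exact: (@final R _ _ _ _ _ _ _ _ hK0 hW0 hWK B0 A0 hA hBg (ltW epos) he' he0 he1 hK'0 hU hL).
Qed.
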